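(* (Cauchy–Schwarz inequality) Let $V$ be a vector space over $\mathbb{K}$ and let $F$ be a geometric mean closed Archimedean vector lattice over $\mathbb{K}$. Let $T\colon V\times V\to F$ be positive semidefinite, conjugate symmetric and sesquilinear. Then for all $u,v\in V$: (1) $\inf_{z\in\mathbb{K}\setminus\{0\}}\{|z|^{-1}T(zu-v,zu-v)\}$ exists in $F$; (2) $|T(u,v)|=T(u,u)\boxtimes T(v,v)-2^{-1}\inf_{z\in\mathbb{K}\setminus\{0\}}\{|z|^{-1}T(zu-v,zu-v)\}$; (3) $|T(u,v)|\le T(u,u)\boxtimes T(v,v)$; (4) $|T(u,v)|=T(u,u)\boxtimes T(v,v)$ if and only if $\inf_{z\in\mathbb{K}\setminus\{0\}}\{|z|^{-1}T(zu-v,zu-v)\}=0$.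
   Context: $\mathbb{K}$ denotes $\mathbb{R}$ or $\mathbb{C}$. An Archimedean real vector lattice $E$ is square mean closed if $\sup\{(\cos\theta)f+(\sin\theta)g:\theta\in[0,2\pi]\}$ exists in $E$ for all $f,g\in E$. An Archimedean vector lattice over $\mathbb{C}$ is a complex vector space $E+iE$ (complexification) where $E$ is a square mean closed Archimedean real vector lattice; its modulus is $|f+ig|=\sup\{(\cos\theta)f+(\sin\theta)g:\theta\in[0,2\pi]\}$. An Archimedean vector lattice over $\mathbb{R}$ is an Archimedean real vector lattice with $|f|=f\vee(-f)$. For an Archimedean vector lattice $E$ over $\mathbb{K}$: positive cone $E^{+}=\{f\in E:|f|=f\}$, real part $E_\rho=\{f-g:f,g\in E^+\}$, with the order of $E_\rho$; infima and suprema are taken in $E_\rho$. $E$ is geometric mean closed if $\inf\{\theta f+\theta^{-1}g:\theta\in(0,\infty)\}$ exists in $E_\rho$ for all $f,g\in E^+$, and then $f\boxtimes g=2^{-1}\inf\{\theta f+\theta^{-1}g:\theta\in(0,\infty)\}$. Complex conjugation on $E$: $\overline{f+ig}=f-ig$ ($f,g\in E_\rho$; trivial in the real case). A map $T\colon V\times V\to F$ is positive semidefinite if $T(v,v)\ge0$ for all $v$; conjugate symmetric if $T(u,v)=\overline{T(v,u)}$; sesquilinear if it is linear in the first variable and conjugate linear in the second: $T(u,\alpha v_1+\beta v_2)=\bar\alpha T(u,v_1)+\bar\beta T(u,v_2)$. *)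

(* Defs.v *)
From Stdlib Require Import Reals Lra ClassicalEpsilon.
Open Scope R_scope.
Set Implicit Arguments.

Definition is_sup {A : Type} (le : A -> A -> Prop) (S : A -> Prop) (s : A) : Prop :=
  (forall x, S x -> le x s) /\ (forall b, (forall x, S x -> le x b) -> le s b).

Record RVL := {
  car : Type;
  zero : car;
  add : car -> car -> car;
  opp : car -> car;
  smul : R -> car -> car;
  le : car -> car -> Prop;
  add_assoc : forall x y z, add x (add y z) = add (add x y) z;
  add_comm : forall x y, add x y = add y x;
  add_0 : forall x, add zero x = x;
  add_opp : forall x, add x (opp x) = zero;
  smul_assoc : forall a b x, smul a (smul b x) = smul (a * b) x;
  smul_1 : forall x, smul 1 x = x;
  smul_distr_l : forall a x y, smul a (add x y) = add (smul a x) (smul a y);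
  smul_distr_r : forall a b x, smul (a + b) x = add (smul a x) (smul b x);
  le_refl : forall x, le x x;
  le_antisym : forall x y, le x y -> le y x -> x = y;
  le_trans : forall x y z, le x y -> le y z -> le x z;
  le_add : forall x y z, le x y -> le (add x z) (add y z);
  le_smul : forall a x, 0 <= a -> le zero x -> le zero (smul a x);
  sup2_ex : forall x y, exists s, is_sup le (fun z => z = x \/ z = y) s;
  archimedean : forall x y, le zero x ->
      (forall n : nat, le (smul (INR n) x) y) -> x = zero
}.

Definition square_mean_closed (E : RVL) : Prop :=
  forall f g : car E, exists s, is_sup (le E)
    (fun x => exists t, 0 <= t <= 2 * PI /\
       x = add E (smul E (cos t) f) (smul E (sin t) g)) s.

(** chosen supremum (meaningful when it exists) *)
Definition esup (E : RVL) (S : car E -> Prop) : car E :=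
  epsilon (inhabits (zero E)) (is_sup (le E) S).

Inductive fld := Kreal | Kcomplex.

Definition Kty (k : fld) : Type :=
  match k with Kreal => R | Kcomplex => (R * R)%type end.

Definition Kzero (k : fld) : Kty k :=
  match k as k0 return Kty k0 with Kreal => 0 | Kcomplex => (0, 0) end.
Definition Kone (k : fld) : Kty k :=
  match k as k0 return Kty k0 with Kreal => 1 | Kcomplex => (1, 0) end.
Definition Kofreal (k : fld) (r : R) : Kty k :=
  match k as k0 return Kty k0 with Kreal => r | Kcomplex => (r, 0) end.
Definition Kadd {k : fld} : Kty k -> Kty k -> Kty k :=
  match k as k0 return Kty k0 -> Kty k0 -> Kty k0 with
  | Kreal => fun a b => a + b
  | Kcomplex => fun a b => (fst a + fst b, snd a + snd b) end.
Definition Kmul {k : fld} : Kty k -> Kty k -> Kty k :=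
  match k as k0 return Kty k0 -> Kty k0 -> Kty k0 with
  | Kreal => fun a b => a * b
  | Kcomplex => fun a b => (fst a * fst b - snd a * snd b,
                            fst a * snd b + snd a * fst b) end.
Definition Kconj {k : fld} : Kty k -> Kty k :=
  match k as k0 return Kty k0 -> Kty k0 with
  | Kreal => fun a => a
  | Kcomplex => fun a => (fst a, - snd a) end.
Definition Knorm {k : fld} : Kty k -> R :=
  match k as k0 return Kty k0 -> R with
  | Kreal => fun a => Rabs a
  | Kcomplex => fun a => sqrt (fst a * fst a + snd a * snd a) end.

Record KVS (k : fld) := {
  vcar : Type;
  vzero : vcar;
  vadd : vcar -> vcar -> vcar;
  vopp : vcar -> vcar;
  vsmul : Kty k -> vcar -> vcar;
  vadd_assoc : forall x y z, vadd x (vadd y z) = vadd (vadd x y) z;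
  vadd_comm : forall x y, vadd x y = vadd y x;
  vadd_0 : forall x, vadd vzero x = x;
  vadd_opp : forall x, vadd x (vopp x) = vzero;
  vsmul_assoc : forall a b x, vsmul a (vsmul b x) = vsmul (Kmul a b) x;
  vsmul_1 : forall x, vsmul (Kone k) x = x;
  vsmul_distr_l : forall a x y, vsmul a (vadd x y) = vadd (vsmul a x) (vsmul a y);
  vsmul_distr_r : forall a b x, vsmul (Kadd a b) x = vadd (vsmul a x) (vsmul b x)
}.

(** * The Archimedean vector lattice F over K built from E:
    F = E if K = R, and F = E + iE (pairs) if K = C. *)
Definition Fcar (k : fld) (E : RVL) : Type :=
  match k with Kreal => car E | Kcomplex => (car E * car E)%type end.

Definition Fzero {k : fld} {E : RVL} : Fcar k E :=
  match k as k0 return Fcar k0 E with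
  | Kreal => zero E | Kcomplex => (zero E, zero E) end.
Definition Fadd {k : fld} {E : RVL} : Fcar k E -> Fcar k E -> Fcar k E :=
  match k as k0 return Fcar k0 E -> Fcar k0 E -> Fcar k0 E with
  | Kreal => fun x y => add E x y
  | Kcomplex => fun x y => (add E (fst x) (fst y), add E (snd x) (snd y)) end.
Definition Fopp {k : fld} {E : RVL} : Fcar k E -> Fcar k E :=
  match k as k0 return Fcar k0 E -> Fcar k0 E with
  | Kreal => fun x => opp E x
  | Kcomplex => fun x => (opp E (fst x), opp E (snd x)) end.
Definition Fsub {k : fld} {E : RVL} (x y : Fcar k E) : Fcar k E := Fadd x (Fopp y).
(** scalar multiplication by K: (a+ib)(f+ig) = (af - bg) + i(ag + bf) *)
Definition Fsmul {k : fld} {E : RVL} : Kty k -> Fcar k E -> Fcar k E :=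
  match k as k0 return Kty k0 -> Fcar k0 E -> Fcar k0 E with
  | Kreal => fun a x => smul E a x
  | Kcomplex => fun a x =>
      (add E (smul E (fst a) (fst x)) (opp E (smul E (snd a) (snd x))),
       add E (smul E (fst a) (snd x)) (smul E (snd a) (fst x))) end.
Definition Frsmul {k : fld} {E : RVL} (r : R) (x : Fcar k E) : Fcar k E :=
  Fsmul (Kofreal k r) x.
Definition Fconj {k : fld} {E : RVL} : Fcar k E -> Fcar k E :=
  match k as k0 return Fcar k0 E -> Fcar k0 E with
  | Kreal => fun x => x
  | Kcomplex => fun x => (fst x, opp E (snd x)) end.
Definition Fmod {k : fld} {E : RVL} : Fcar k E -> Fcar k E :=
  match k as k0 return Fcar k0 E -> Fcar k0 E with
  | Kreal => fun f => esup E (fun x => x = f \/ x = opp E f)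
  | Kcomplex => fun f =>
      (esup E (fun x => exists t, 0 <= t <= 2 * PI /\
          x = add E (smul E (cos t) (fst f)) (smul E (sin t) (snd f))),
       zero E) end.

Definition Fpos {k : fld} {E : RVL} (f : Fcar k E) : Prop := Fmod f = f.
Definition Freal {k : fld} {E : RVL} (f : Fcar k E) : Prop :=
  exists a b, Fpos a /\ Fpos b /\ f = Fsub a b.
Definition Fle {k : fld} {E : RVL} (f g : Fcar k E) : Prop := Fpos (Fsub g f).

Definition Fis_inf {k : fld} {E : RVL} (S : Fcar k E -> Prop) (m : Fcar k E) : Prop :=
  Freal m /\ (forall x, S x -> Fle m x) /\
  (forall b, Freal b -> (forall x, S x -> Fle b x) -> Fle b m).
(** chosen infimum (meaningful when it exists) *)
Definition Finf {k : fld} {E : RVL} (S : Fcar k E -> Prop) : Fcar k E :=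
  epsilon (inhabits Fzero) (Fis_inf S).

Definition geom_set {k : fld} {E : RVL} (f g : Fcar k E) : Fcar k E -> Prop :=
  fun x => exists t, 0 < t /\ x = Fadd (Frsmul t f) (Frsmul (/ t) g).
Definition geom_mean_closed (k : fld) (E : RVL) : Prop :=
  forall f g : Fcar k E, Fpos f -> Fpos g -> exists m, Fis_inf (geom_set f g) m.
Definition Fgm {k : fld} {E : RVL} (f g : Fcar k E) : Fcar k E :=
  Frsmul (/ 2) (Finf (geom_set f g)).

(** F is an Archimedean vector lattice over K (E is square mean closed if K = C) *)
Definition AVL_over (k : fld) (E : RVL) : Prop :=
  match k with Kreal => True | Kcomplex => square_mean_closed E end.

Definition CS_set {k : fld} {E : RVL} (V : KVS k)
  (T : vcar V -> vcar V -> Fcar k E) (u v : vcar V) : Fcar k E -> Prop :=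
  fun x => exists z : Kty k, z <> Kzero k /\
    x = Frsmul (/ Knorm z)
          (T (vadd V (vsmul V z u) (vopp V v)) (vadd V (vsmul V z u) (vopp V v))).

(* Main.v *)
From Stdlib Require Import Nsatz.
Require Import Defs.
From Stdlib Require Import Reals Lra Lia List ClassicalEpsilon.
Import ListNotations.
Open Scope R_scope.


Section Alg.
Variable E : RVL.
Notation add := (add E). Notation opp := (opp E). Notation smul := (smul E).
Notation zero := (zero E).

Lemma add_0r x : add x zero = x.
Proof. rewrite add_comm; apply add_0. Qed.

Lemma add_cancel_self y : add y y = y -> y = zero.
Proof.
  intro H. rewrite <- (add_opp E y). rewrite <- H at 2.
  rewrite <- add_assoc, add_opp, add_0r. reflexivity.
Qed.

Lemma smul_0 x : smul 0 x = zero.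
Proof.
  apply add_cancel_self. rewrite <- smul_distr_r. f_equal. ring.
Qed.

Lemma opp_unique x y : add x y = zero -> y = opp x.
Proof.
  intro H. transitivity (add (add (opp x) x) y).
  - rewrite (add_comm E (opp x)), add_opp, add_0. reflexivity.
  - rewrite <- add_assoc, H, add_0r. reflexivity.
Qed.

Lemma opp_smul x : opp x = smul (-1) x.
Proof.
  symmetry. apply opp_unique. rewrite <- (smul_1 E x) at 1.
  rewrite <- smul_distr_r. replace (1 + -1) with 0 by ring. apply smul_0.
Qed.

Lemma smul_zero r : smul r zero = zero.
Proof. rewrite <- (smul_0 zero), smul_assoc. f_equal. ring. Qed.

Fixpoint lsum (env : list (car E)) (f : nat -> R) (j : nat) : car E :=
  match env with nil => zero | x :: l => add (smul (f j) x) (lsum l f (S j)) end.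

Lemma lsum_ext env : forall f g j, (forall i, (j <= i)%nat -> f i = g i) ->
  lsum env f j = lsum env g j.
Proof.
  induction env; intros f g j H; simpl; auto.
  rewrite H by lia. f_equal. apply IHenv. intros; apply H; lia.
Qed.

Lemma lsum_zero env : forall j, lsum env (fun _ => 0) j = zero.
Proof.
  induction env; intros j; simpl; auto. rewrite IHenv, smul_0, add_0. auto.
Qed.

Lemma add4 a b c d : add (add a b) (add c d) = add (add a c) (add b d).
Proof.
  rewrite <- !add_assoc. f_equal. rewrite !add_assoc. f_equal. apply add_comm.
Qed.

Lemma lsum_add env : forall f g j,
  lsum env (fun i => f i + g i) j = add (lsum env f j) (lsum env g j).
Proof.
  induction env; intros f g j; simpl.
  - rewrite add_0. auto.
  - rewrite IHenv, smul_distr_r. apply add4.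
Qed.

Lemma lsum_smul env : forall r f j,
  lsum env (fun i => r * f i) j = smul r (lsum env f j).
Proof.
  induction env; intros r f j; simpl.
  - rewrite smul_zero; auto.
  - rewrite IHenv, smul_distr_l, smul_assoc. auto.
Qed.

Lemma lsum_opp env f j : lsum env (fun i => - f i) j = opp (lsum env f j).
Proof.
  rewrite opp_smul, <- lsum_smul. apply lsum_ext. intros; ring.
Qed.

Lemma lsum_atom env : forall n j,
  lsum env (fun i => if Nat.eqb (n + j) i then 1 else 0) j = nth n env zero.
Proof.
  induction env; intros n j; simpl.
  - destruct n; auto.
  - destruct n as [|n].
    + simpl. rewrite Nat.eqb_refl, smul_1.
      rewrite (lsum_ext _ _ (fun _ => 0)), lsum_zero, add_0r; auto.
      intros i Hi. destruct (Nat.eqb_spec j i); auto. lia.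
    + replace (Nat.eqb (S n + j) j) with false.
      2:{ symmetry; apply Nat.eqb_neq; lia. }
      rewrite smul_0, add_0. rewrite <- (IHenv n (S j)).
      apply lsum_ext. intros. replace (n + S j)%nat with (S n + j)%nat by lia. auto.
Qed.

Inductive lexp := LAt (n : nat) | LZ | LA (a b : lexp) | LO (a : lexp) | LS (r : R) (a : lexp).

Fixpoint leval (env : list (car E)) (e : lexp) : car E :=
  match e with
  | LAt n => nth n env zero | LZ => zero
  | LA a b => add (leval env a) (leval env b)
  | LO a => opp (leval env a) | LS r a => smul r (leval env a) end.

Fixpoint lcoef (e : lexp) (i : nat) : R :=
  match e with
  | LAt n => if Nat.eqb n i then 1 else 0 | LZ => 0
  | LA a b => lcoef a i + lcoef b i
  | LO a => - lcoef a i | LS r a => r * lcoef a i end.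

Lemma leval_lsum env e : leval env e = lsum env (lcoef e) 0.
Proof.
  induction e; simpl.
  - rewrite <- (lsum_atom env n 0). apply lsum_ext; intros. rewrite Nat.add_0_r; auto.
  - symmetry; apply lsum_zero.
  - rewrite IHe1, IHe2, <- lsum_add. auto.
  - rewrite IHe, <- lsum_opp. auto.
  - rewrite IHe, <- lsum_smul. auto.
Qed.
End Alg.

Ltac lindex x l := match l with
 | x :: _ => constr:(O)
 | _ :: ?l' => let n := lindex x l' in constr:(S n)
 end.
Ltac addatom t l := match constr:(tt) with
 | _ => let n := lindex t l in constr:(l)
 | _ => constr:(t :: l)
 end.
Ltac lcollect E t l := match t with
 | add E ?a ?b => let l1 := lcollect E a l in lcollect E b l1
 | opp E ?a => lcollect E a l
 | smul E _ ?a => lcollect E a l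
 | zero E => l
 | _ => addatom t l
 end.
Ltac lreify E t env := match t with
 | add E ?a ?b => let ra := lreify E a env in let rb := lreify E b env in constr:(LA ra rb)
 | opp E ?a => let ra := lreify E a env in constr:(LO ra)
 | smul E ?r ?a => let ra := lreify E a env in constr:(LS r ra)
 | zero E => constr:(LZ)
 | _ => let n := lindex t env in constr:(LAt n)
 end.
Ltac lin_close E := repeat match goal with
 | |- add E ?a ?b = add E ?c ?d => apply (f_equal2 (add E))
 | |- smul E ?r ?x = smul E ?s ?x => apply (f_equal2 (smul E)); [| reflexivity]
 | |- zero E = zero E => reflexivity
 end.
Ltac lin_eq E := match goal with |- ?x = ?y =>
  let l0 := lcollect E x (@nil (car E)) in let l := lcollect E y l0 in
  let ex := lreify E x l in let ey := lreify E y l in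
  change (leval E l ex = leval E l ey);
  rewrite !(leval_lsum E l); cbn [lsum lcoef Nat.eqb]; lin_close E end.


Ltac lin_ring E := lin_eq E; ring.

Definition is_inf {A : Type} (le : A -> A -> Prop) (S : A -> Prop) (m : A) : Prop :=
  (forall x, S x -> le m x) /\ (forall b, (forall x, S x -> le b x) -> le b m).

Section Ord.
Variable E : RVL.
Notation add := (add E). Notation opp := (opp E). Notation smul := (smul E).
Notation zero := (zero E). Notation le := (le E).

Lemma le_eq x y x' y' : x = x' -> y = y' -> le x' y' -> le x y.
Proof. intros -> -> ; auto. Qed.

Lemma le_addl x y z : le x y -> le (add z x) (add z y).
Proof. intro H. rewrite !(add_comm E z). apply le_add; auto. Qed.

Lemma le_add2 x y x' y' : le x y -> le x' y' -> le (add x x') (add y y').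
Proof.
  intros H1 H2. apply le_trans with (add y x'). apply le_add; auto. apply le_addl; auto.
Qed.

Lemma le_sub x y : le x y <-> le zero (add y (opp x)).
Proof.
  split; intro H.
  - apply le_eq with (add x (opp x)) (add y (opp x)); [lin_ring E|auto|]. apply le_add; auto.
  - apply le_eq with (add zero x) (add (add y (opp x)) x); [lin_ring E|lin_ring E|]. apply le_add; auto.
Qed.

Lemma le_smul_mono r x y : 0 <= r -> le x y -> le (smul r x) (smul r y).
Proof.
  intros Hr H. apply le_sub in H. apply le_sub.
  apply le_eq with zero (smul r (add y (opp x))); [auto|lin_ring E|]. apply le_smul; auto.
Qed.

Lemma le_opp x y : le x y -> le (opp y) (opp x).
Proof.
  intro H. apply le_sub in H. apply le_sub. eapply le_eq; [reflexivity| |exact H]. lin_ring E.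
Qed.

Lemma sup_unique (S : car E -> Prop) s s' : is_sup le S s -> is_sup le S s' -> s = s'.
Proof. intros [H1 H2] [H3 H4]. apply le_antisym; auto. Qed.

Lemma inf_unique (S : car E -> Prop) s s' : is_inf le S s -> is_inf le S s' -> s = s'.
Proof. intros [H1 H2] [H3 H4]. apply le_antisym; auto. Qed.

Lemma esup_eq S s : is_sup le S s -> esup E S = s.
Proof.
  intro H. unfold esup. apply (sup_unique S); auto.
  apply epsilon_spec. exists s; auto.
Qed.

Lemma is_inf_ext (S S' : car E -> Prop) m : (forall w, S w <-> S' w) -> is_inf le S m -> is_inf le S' m.
Proof.
  intros Heq [H1 H2]. split.
  - intros x Hx. apply H1, Heq; auto.
  - intros b Hb. apply H2. intros x Hx. apply Hb, Heq; auto.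
Qed.

Lemma abs_self x : is_sup le (fun z => z = x \/ z = opp x) x <-> le zero x.
Proof.
  split.
  - intros [H1 _]. assert (Hx : le (opp x) x) by (apply H1; auto).
    apply le_sub in Hx.
    apply le_eq with (smul (/2) zero) (smul (/2) (add x (opp (opp x)))).
    + rewrite smul_zero; auto.
    + lin_eq E; field.
    + apply le_smul_mono; auto. lra.
  - intro H. split.
    + intros z [->| ->]. apply le_refl. apply le_trans with zero; auto.
      apply le_eq with (opp x) (opp zero). auto. lin_ring E. apply le_opp; auto.
    + intros b Hb. apply Hb; auto.
Qed.

Lemma decomp x : exists a b, le zero a /\ le zero b /\ x = add a (opp b).
Proof.
  destruct (sup2_ex E x zero) as [s [Hs1 _]].
  exists s, (add s (opp x)). split; [apply Hs1; auto|]. split.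
  - apply (proj1 (le_sub x s)). apply Hs1; auto.
  - lin_ring E.
Qed.

Lemma cos_sup p s : is_sup le (fun z => z = p \/ z = opp p) s ->
  is_sup le (fun x => exists t, 0 <= t <= 2 * PI /\
       x = add (smul (cos t) p) (smul (sin t) zero)) s.
Proof.
  intros [H1 H2]. split.
  - intros x [t [_ ->]].
    pose proof (COS_bound t).
    apply le_eq with (add (smul ((1 + cos t)/2) p) (smul ((1 - cos t)/2) (opp p)))
      (add (smul ((1 + cos t)/2) s) (smul ((1 - cos t)/2) s)).
    + lin_eq E; field.
    + lin_eq E; field.
    + apply le_add2; apply le_smul_mono; try lra; apply H1; auto.
  - intros b Hb. apply H2. intros z [->| ->]; apply Hb.
    + exists 0. split. pose proof PI_RGT_0; lra. rewrite cos_0, sin_0. lin_ring E.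
    + exists PI. split. pose proof PI_RGT_0; lra. rewrite cos_PI, sin_PI. lin_ring E.
Qed.

Lemma inf_sub (X Y : car E -> Prop) g s : is_inf le X g -> is_sup le Y s ->
  is_inf le (fun w => exists x y, X x /\ Y y /\ w = add x (smul (-2) y)) (add g (smul (-2) s)).
Proof.
  intros [HX1 HX2] [HY1 HY2]. split.
  - intros w [x [y [Hx [Hy ->]]]]. apply le_add2; auto.
    apply le_eq with (smul 2 (opp s)) (smul 2 (opp y)); try lin_ring E.
    apply le_smul_mono; try lra. apply le_opp; auto.
  - intros b Hb.
    assert (Hy : forall y, Y y -> le y (smul (/2) (add g (opp b)))).
    { intros y Hy. assert (Hg : le (add b (smul 2 y)) g).
      { apply HX2. intros x Hx. specialize (Hb _ (ex_intro _ x (ex_intro _ y (conj Hx (conj Hy eq_refl))))).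
        apply le_eq with (add b (smul 2 y)) (add (add x (smul (-2) y)) (smul 2 y)); [auto|lin_ring E|].
        apply le_add; auto. }
      apply le_eq with (smul (/2) (smul 2 y)) (smul (/2) (add (add g (opp b)) (zero))).
      lin_eq E; field. lin_ring E.
      apply le_smul_mono. lra.
      apply le_eq with (add (add b (smul 2 y)) (opp b)) (add g (opp b)). lin_ring E. lin_ring E.
      apply le_add; auto. }
    apply HY2 in Hy.
    apply le_eq with (add (add g (smul (-2) s)) (opp (smul 2 (add (smul (/ 2) (add g (opp b))) (opp s)))))
      (add (add g (smul (-2) s)) (opp (smul 2 zero))).
    lin_eq E; field. lin_ring E.
    apply le_addl. apply le_opp. apply le_sub in Hy.
    apply le_smul_mono; auto; lra.
Qed.
End Ord.


Lemma Fpos_R (E:RVL) (p : car E) : @Fpos Kreal E p <-> le E (zero E) p.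
Proof.
  unfold Fpos, Fmod. simpl.
  destruct (sup2_ex E p (opp E p)) as [s Hs].
  rewrite (esup_eq E _ s Hs). split.
  - intros <-. eapply (proj1 (abs_self _ _)); eauto.
  - intro H. apply (sup_unique E _ _ _ Hs). apply (proj2 (abs_self _ _)); auto.
Qed.

Lemma Fpos_C (E:RVL) (p1 p2 : car E) : @Fpos Kcomplex E (p1, p2) <-> p2 = zero E /\ le E (zero E) p1.
Proof.
  unfold Fpos, Fmod; simpl. split.
  - intro H. injection H as H1 H2. subst p2.
    destruct (sup2_ex E p1 (opp E p1)) as [s Hs].
    rewrite (esup_eq E _ s (cos_sup E _ _ Hs)) in H1. subst. split; auto. eapply (proj1 (abs_self _ _)); eauto.
  - intros [-> H]. f_equal. apply esup_eq, cos_sup, (proj2 (abs_self _ _)); auto.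
Qed.

Lemma Fle_R (E:RVL) (x y : car E) : @Fle Kreal E x y <-> le E x y.
Proof.
  unfold Fle, Fsub. simpl. rewrite Fpos_R. symmetry; apply le_sub.
Qed.

Lemma Fle_C (E:RVL) (p1 p2 q1 q2 : car E) : @Fle Kcomplex E (p1,p2) (q1,q2) <->
  add E q2 (opp E p2) = zero E /\ le E p1 q1.
Proof.
  unfold Fle, Fsub. simpl. rewrite Fpos_C. rewrite (le_sub E p1 q1). tauto.
Qed.

Lemma Freal_R (E:RVL) (x : car E) : @Freal Kreal E x.
Proof.
  destruct (decomp E x) as [a [b [Ha [Hb ->]]]]. exists a, b.
  rewrite !Fpos_R. auto.
Qed.

Lemma Freal_C (E:RVL) (p1 p2 : car E) : @Freal Kcomplex E (p1,p2) <-> p2 = zero E.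
Proof.
  split.
  - intros [[a1 a2] [[b1 b2] [Ha [Hb H]]]]. apply Fpos_C in Ha, Hb.
    destruct Ha as [-> _], Hb as [-> _]. unfold Fsub in H; simpl in H.
    injection H as _ ->. lin_ring E.
  - intros ->. destruct (decomp E p1) as [a [b [Ha [Hb ->]]]].
    exists (a, zero E), (b, zero E). rewrite !Fpos_C. repeat split; auto.
    unfold Fsub; simpl. f_equal. lin_ring E.
Qed.

Lemma Fle_antisym k E (x y : Fcar k E) : Freal x -> Freal y -> Fle x y -> Fle y x -> x = y.
Proof.
  destruct k.
  - rewrite !Fle_R. intros. apply le_antisym; auto.
  - destruct x as [x1 x2], y as [y1 y2]. rewrite !Freal_C, !Fle_C.
    intros -> -> [_ H1] [_ H2]. f_equal. apply le_antisym; auto.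
Qed.

Lemma Finf_eq k E (S : Fcar k E -> Prop) m : Fis_inf S m -> Finf S = m.
Proof.
  intro H. unfold Finf.
  assert (H' : Fis_inf S (epsilon (inhabits Fzero) (Fis_inf S))).
  { apply epsilon_spec. exists m; auto. }
  destruct H as [Hr [H1 H2]], H' as [Hr' [H1' H2']].
  apply Fle_antisym; auto.
Qed.

Lemma Fsub_zero k E (p : Fcar k E) : Fsub p Fzero = p.
Proof.
  destruct k; unfold Fsub; simpl.
  - lin_ring E.
  - destruct p; simpl. f_equal; lin_ring E.
Qed.

Lemma Fle0 k E (p : Fcar k E) : Fle Fzero p <-> Fpos p.
Proof. unfold Fle. rewrite Fsub_zero. tauto. Qed.

Lemma Freal_zero k E : @Freal k E Fzero.
Proof. destruct k. apply Freal_R. simpl. apply Freal_C. auto. Qed.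

Lemma Fpos_rsmul k E r (p : Fcar k E) : 0 <= r -> Fpos p -> Fpos (Frsmul r p).
Proof.
  destruct k.
  - rewrite !Fpos_R. unfold Frsmul; simpl. intros; apply le_smul; auto.
  - destruct p as [p1 p2]. rewrite Fpos_C. intros Hr [-> H].
    unfold Frsmul; simpl. apply (proj2 (Fpos_C _ _ _)). split. lin_ring E.
    apply le_eq with (zero E) (smul E r p1); auto. lin_ring E. apply le_smul; auto.
Qed.

Lemma final_part k E (B X M : Fcar k E) : Fle Fzero M ->
  B = Fsub X (Frsmul (/2) M) -> Fle B X /\ (B = X <-> M = Fzero).
Proof.
  intros HM ->. apply (proj1 (Fle0 _ _ _)) in HM. split.
  - destruct k.
    + apply (proj1 (Fpos_R _ _)) in HM. apply (proj2 (Fle_R _ _ _)). unfold Fsub, Frsmul; simpl.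
      apply le_eq with (add E X (opp E (smul E (/2) M))) (add E X (zero E)). auto. lin_ring E.
      apply le_addl. apply le_eq with (opp E (smul E (/2) M)) (opp E (smul E (/2) (zero E))).
      auto. lin_ring E. apply le_opp, le_smul_mono; auto. lra.
    + destruct X as [X1 X2], M as [M1 M2]. apply (proj1 (Fpos_C _ _ _)) in HM. destruct HM as [-> HM].
      unfold Fsub, Frsmul; simpl. apply (proj2 (Fle_C _ _ _ _ _)). split. lin_ring E.
      apply le_eq with (add E X1 (opp E (smul E (/2) M1))) (add E X1 (zero E)). lin_ring E. lin_ring E.
      apply le_addl. apply le_eq with (opp E (smul E (/2) M1)) (opp E (smul E (/2) (zero E))).
      auto. lin_ring E. apply le_opp, le_smul_mono; auto. lra.
  - destruct k.
    + unfold Fsub, Frsmul; simpl. split.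
      * intro H. transitivity (smul E (-2) (add E (add E X (opp E (smul E (/ 2) M))) (opp E X))).
        lin_eq E; field. rewrite H. lin_ring E.
      * intros ->. lin_ring E.
    + destruct X as [X1 X2], M as [M1 M2]. apply (proj1 (Fpos_C _ _ _)) in HM. destruct HM as [-> HM].
      unfold Fsub, Frsmul; simpl. split.
      * intro H. injection H as H _. f_equal.
        transitivity (smul E (-2) (add E (add E X1 (opp E (add E (smul E (/ 2) M1) (opp E (smul E 0 (zero E)))))) (opp E X1))).
        lin_eq E; field. rewrite H. lin_ring E.
      * intro H. injection H as ->. f_equal; lin_ring E.
Qed.


Lemma Fis_inf_R E (S : car E -> Prop) m : @Fis_inf Kreal E S m <-> is_inf (le E) S m.
Proof.
  unfold Fis_inf, is_inf. split.
  - intros [_ [H1 H2]]. split.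
    + intros x Hx. apply Fle_R; auto.
    + intros b Hb. apply Fle_R, H2. apply Freal_R. intros x Hx; apply Fle_R; auto.
  - intros [H1 H2]. split; [apply Freal_R|]. split.
    + intros x Hx. apply Fle_R; auto.
    + intros b _ Hb. apply Fle_R, H2. intros x Hx; apply Fle_R; auto.
Qed.

Lemma Fis_inf_C E (S : Fcar Kcomplex E -> Prop) m1 m2 :
  (forall w, S w -> snd w = zero E) ->
  (@Fis_inf Kcomplex E S (m1, m2) <-> m2 = zero E /\ is_inf (le E) (fun x1 => S (x1, zero E)) m1).
Proof.
  intro HS. unfold Fis_inf, is_inf. split.
  - intros [Hr [H1 H2]]. apply Freal_C in Hr. subst m2. split; auto. split.
    + intros x Hx. apply H1 in Hx. apply Fle_C in Hx. tauto.
    + intros b Hb. assert (Fle (k:=Kcomplex) (b, zero E) (m1, zero E)).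
      { apply H2. apply Freal_C; auto. intros [x1 x2] Hx.
        pose proof (HS _ Hx) as Hx2. simpl in Hx2. subst x2.
        apply Fle_C. split. lin_ring E. apply Hb; auto. }
      apply Fle_C in H. tauto.
  - intros [-> [H1 H2]]. split; [apply Freal_C; auto|]. split.
    + intros [x1 x2] Hx. pose proof (HS _ Hx) as Hx2. simpl in Hx2. subst x2.
      apply Fle_C. split. lin_ring E. apply H1; auto.
    + intros [b1 b2] Hbr Hb. apply Freal_C in Hbr. subst b2.
      apply Fle_C. split. lin_ring E. apply H2. intros x Hx.
      apply Hb in Hx. apply Fle_C in Hx. tauto.
Qed.

Lemma polar p q : p * p + q * q = 1 -> exists t, 0 <= t <= 2 * PI /\ cos t = p /\ sin t = q.
Proof.
  intro H.
  assert (Hp : -1 <= p <= 1) by nra.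
  assert (Hs : sqrt (1 - p²) = Rabs q).
  { rewrite <- sqrt_Rsqr_abs. f_equal. unfold Rsqr. lra. }
  pose proof (acos_bound p).
  destruct (Rle_or_lt 0 q) as [Hq|Hq].
  - exists (acos p). split. pose proof PI_RGT_0; lra. split. apply cos_acos; auto.
    rewrite sin_acos, Hs by auto. apply Rabs_right; lra.
  - exists (2 * PI - acos p). split. pose proof PI_RGT_0; lra.
    rewrite cos_minus, sin_minus, cos_2PI, sin_2PI, cos_acos, sin_acos, Hs by auto.
    rewrite Rabs_left by auto. split; ring.
Qed.


Section VS.
Variable k : fld.
Variable V : KVS k.
Notation vadd := (vadd V). Notation vsmul := (vsmul V). Notation vzero := (vzero V).
Notation vopp := (vopp V).

Lemma vadd_0r x : vadd x vzero = x.
Proof. rewrite vadd_comm; apply vadd_0. Qed.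

Lemma vsmul_0 x : vsmul (Kzero k) x = vzero.
Proof.
  assert (H : vadd (vsmul (Kzero k) x) (vsmul (Kzero k) x) = vsmul (Kzero k) x).
  { rewrite <- vsmul_distr_r. f_equal. destruct k; simpl; try f_equal; ring. }
  set (y := vsmul (Kzero k) x) in *.
  rewrite <- (vadd_opp V y). rewrite <- H at 2.
  rewrite <- vadd_assoc, vadd_opp, vadd_0r. reflexivity.
Qed.

Lemma vopp_eq x : vopp x = vsmul (Kofreal k (-1)) x.
Proof.
  set (y := vsmul (Kofreal k (-1)) x).
  assert (H : vadd x y = vzero).
  { unfold y. rewrite <- (vsmul_1 V x) at 1. rewrite <- vsmul_distr_r.
    rewrite <- (vsmul_0 x). f_equal. destruct k; simpl; try f_equal; ring. }
  transitivity (vadd (vadd (vopp x) x) y).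
  - rewrite <- vadd_assoc, H, vadd_0r. reflexivity.
  - rewrite (vadd_comm V (vopp x)), vadd_opp, vadd_0. reflexivity.
Qed.
End VS.

Lemma T_expand k E (V : KVS k) (T : vcar V -> vcar V -> Fcar k E)
  (Hlin : forall (a b : Kty k) (v1 v2 w : vcar V),
     T (vadd V (vsmul V a v1) (vsmul V b v2)) w =
     Fadd (Fsmul a (T v1 w)) (Fsmul b (T v2 w)))
  (Hclin : forall (a b : Kty k) (w v1 v2 : vcar V),
     T w (vadd V (vsmul V a v1) (vsmul V b v2)) =
     Fadd (Fsmul (Kconj a) (T w v1)) (Fsmul (Kconj b) (T w v2))) u v z :
  T (vadd V (vsmul V z u) (vopp V v)) (vadd V (vsmul V z u) (vopp V v)) =
  Fadd (Fsmul z (Fadd (Fsmul (Kconj z) (T u u)) (Fsmul (Kconj (Kofreal k (-1))) (T u v))))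
       (Fsmul (Kofreal k (-1)) (Fadd (Fsmul (Kconj z) (T v u)) (Fsmul (Kconj (Kofreal k (-1))) (T v v)))).
Proof. rewrite vopp_eq, Hlin, !Hclin. reflexivity. Qed.

Lemma Knorm_nonneg k (z : Kty k) : 0 <= Knorm z.
Proof. destruct k; simpl. apply Rabs_pos. apply sqrt_pos. Qed.

Lemma CS_lower k E (V : KVS k) (T : vcar V -> vcar V -> Fcar k E)
  (Hpsd : forall v, Fpos (T v v)) u v x : CS_set V T u v x -> Fle Fzero x.
Proof.
  intros [z [_ ->]]. apply Fle0. apply Fpos_rsmul; auto.
  destruct (Knorm_nonneg k z) as [H|H].
  - left; apply Rinv_0_lt_compat; auto.
  - rewrite <- H, Rinv_0. lra.
Qed.


Lemma main_R (E : RVL) (HF : geom_mean_closed Kreal E) (V : KVS Kreal)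
  (T : vcar V -> vcar V -> Fcar Kreal E)
  (Hpsd : forall v, Fpos (T v v))
  (Hsym : forall u v, T u v = Fconj (T v u))
  (Hlin : forall (a b : Kty Kreal) (v1 v2 w : vcar V),
     T (vadd V (vsmul V a v1) (vsmul V b v2)) w =
     Fadd (Fsmul a (T v1 w)) (Fsmul b (T v2 w)))
  (Hclin : forall (a b : Kty Kreal) (w v1 v2 : vcar V),
     T w (vadd V (vsmul V a v1) (vsmul V b v2)) =
     Fadd (Fsmul (Kconj a) (T w v1)) (Fsmul (Kconj b) (T w v2))) u v :
  exists M, Fis_inf (CS_set V T u v) M /\
    Fmod (T u v) = Fsub (Fgm (T u u) (T v v)) (Frsmul (/2) M).
Proof.
  destruct (HF _ _ (Hpsd u) (Hpsd v)) as [g Hg0].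
  pose proof Hg0 as Hg. apply Fis_inf_R in Hg.
  destruct (sup2_ex E (T u v) (opp E (T u v))) as [s Hs].
  assert (Hb : T v u = T u v) by (rewrite (Hsym u v); reflexivity).
  exists (add E g (smul E (-2) s)). split.
  - apply Fis_inf_R.
    eapply is_inf_ext; [| apply (inf_sub E _ _ g s Hg Hs)].
    intro w. unfold CS_set, geom_set. split.
    + intros [x [y [[t [Ht ->]] [Hy ->]]]]. destruct Hy as [->| ->].
      * exists t. split. simpl; lra. rewrite T_expand by auto. simpl.
        rewrite Rabs_right by lra. rewrite Hb. lin_eq E; field; lra.
      * exists (-t). split. simpl; lra. rewrite T_expand by auto. simpl.
        rewrite Rabs_left by lra. rewrite Hb. lin_eq E; field; lra.
    + intros [z [Hz ->]]. simpl in Hz. rewrite T_expand by auto. simpl. rewrite Hb.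
      destruct (Rlt_or_le 0 z) as [Hz'|Hz'].
      * exists (add E (smul E z (T u u)) (smul E (/ z) (T v v))), (T u v).
        split. exists z; split; auto. split; auto.
        rewrite Rabs_right by lra. lin_eq E; field; lra.
      * exists (add E (smul E (-z) (T u u)) (smul E (/ -z) (T v v))), (opp E (T u v)).
        split. exists (-z); split. lra. reflexivity. split; auto.
        rewrite Rabs_left by lra. lin_eq E; field; lra.
  - unfold Fgm. rewrite (Finf_eq _ _ _ _ Hg0). simpl.
    rewrite (esup_eq E _ s Hs). lin_eq E; field.
Qed.


Ltac trig_eq t th := let Hsc := fresh in let Hi := fresh in
  pose proof (sin2_cos2 th) as Hsc; unfold Rsqr in Hsc;
  assert (Hi : / t * t = 1) by (field; lra);
  set (cc := cos th) in *; set (ss := sin th) in *; set (ii := / t) in *; nsatz.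

Lemma main_C (E : RVL) (HE : AVL_over Kcomplex E) (HF : geom_mean_closed Kcomplex E) (V : KVS Kcomplex)
  (T : vcar V -> vcar V -> Fcar Kcomplex E)
  (Hpsd : forall v, Fpos (T v v))
  (Hsym : forall u v, T u v = Fconj (T v u))
  (Hlin : forall (a b : Kty Kcomplex) (v1 v2 w : vcar V),
     T (vadd V (vsmul V a v1) (vsmul V b v2)) w =
     Fadd (Fsmul a (T v1 w)) (Fsmul b (T v2 w)))
  (Hclin : forall (a b : Kty Kcomplex) (w v1 v2 : vcar V),
     T w (vadd V (vsmul V a v1) (vsmul V b v2)) =
     Fadd (Fsmul (Kconj a) (T w v1)) (Fsmul (Kconj b) (T w v2))) u v :
  exists M, Fis_inf (CS_set V T u v) M /\
    Fmod (T u v) = Fsub (Fgm (T u u) (T v v)) (Frsmul (/2) M).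
Proof.
  assert (Hpos : forall w, exists a1, T w w = (a1, zero E) /\ le E (zero E) a1).
  { intro w. pose proof (Hpsd w) as H. destruct (T w w) as [a1 a2].
    apply Fpos_C in H. destruct H as [-> H]. eauto. }
  destruct (Hpos u) as [a1 [Ha Ha1]], (Hpos v) as [c1 [Hc Hc1]].
  destruct (T u v) as [b1 b2] eqn:Hbe.
  assert (Hb' : T v u = (b1, opp E b2)) by (rewrite (Hsym v u), Hbe; reflexivity).
  destruct (HE b1 b2) as [s Hs].
  destruct (HF _ _ (Hpsd u) (Hpsd v)) as [[g1 g2] Hg0].
  pose proof Hg0 as Hg. rewrite Ha, Hc in Hg.
  apply Fis_inf_C in Hg.
  2:{ intros w [t [Ht ->]]. simpl. lin_ring E. }
  destruct Hg as [-> Hg].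
  assert (HX : is_inf (le E) (fun x1 => exists t, 0 < t /\ x1 = add E (smul E t a1) (smul E (/ t) c1)) g1).
  { eapply is_inf_ext; [|exact Hg]. intro x1. unfold geom_set. split.
    - intros [t [Ht H]]. exists t. split; auto. injection H as H _. rewrite H. lin_ring E.
    - intros [t [Ht ->]]. exists t. split; auto. simpl. f_equal; lin_ring E. }
  clear Hg.
  pose proof (inf_sub E _ _ g1 s HX Hs) as HI.
  exists (add E g1 (smul E (-2) s), zero E). split.
  - apply Fis_inf_C.
    + intros w [[x y] [Hz ->]]. rewrite T_expand by auto. rewrite Ha, Hb', Hc, Hbe. simpl. lin_ring E.
    + split; auto. eapply is_inf_ext; [|exact HI]. intro x1. unfold CS_set. split.
      * intros [x' [y' [[t [Ht ->]] [[th [Hth ->]] ->]]]].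
        exists (t * cos th, - (t * sin th)). split.
        { intro H. injection H as H1 H2. pose proof (sin2_cos2 th). unfold Rsqr in *. nra. }
        assert (Hn : Knorm (k:=Kcomplex) (t * cos th, - (t * sin th)) = t).
        { simpl. replace (t * cos th * (t * cos th) + - (t * sin th) * - (t * sin th)) with (t * t).
          apply sqrt_square; lra. pose proof (sin2_cos2 th). unfold Rsqr in *. nra. }
        rewrite Hn, T_expand by auto. rewrite Ha, Hb', Hc, Hbe. simpl.
        apply injective_projections; simpl; lin_eq E; try (field; lra). all: trig_eq t th.
      * intros [[x y] [Hz H]]. simpl in Hz, H.
        assert (Hxy : 0 < x*x + y*y).
        { destruct (Req_dec x 0), (Req_dec y 0); [subst; exfalso; apply Hz; reflexivity| nra..]. }
        assert (Hr : 0 < sqrt (x*x+y*y)) by (apply sqrt_lt_R0; auto).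
        assert (Hr2 : sqrt (x*x+y*y) * sqrt (x*x+y*y) = x*x+y*y) by (apply sqrt_sqrt; lra).
        set (r := sqrt (x*x+y*y)) in *.
        assert (Hi : / r * r = 1) by (field; lra).
        destruct (polar (x / r) (- y / r)) as [th [Hth [Hco Hsi]]].
        { unfold Rdiv. set (ii := / r) in *. nsatz. }
        exists (add E (smul E r a1) (smul E (/ r) c1)), (add E (smul E (cos th) b1) (smul E (sin th) b2)).
        split. exists r; split; auto. split. exists th; split; auto.
        rewrite T_expand in H by auto. rewrite Ha, Hb', Hc, Hbe in H. simpl in H.
        injection H as H _. rewrite H, Hco, Hsi.
        clearbody r. lin_eq E. all: try (field; lra). all: unfold Rdiv; set (ii := / r) in *; clearbody ii. clear - Hr2 Hi; nsatz.
  - unfold Fgm. rewrite (Finf_eq _ _ _ _ Hg0). simpl.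
    rewrite (esup_eq E _ s Hs). f_equal; lin_eq E; field.
Qed.

Theorem theorem3p1 (k : fld) (E : RVL) (HE : AVL_over k E)
  (HF : geom_mean_closed k E) (V : KVS k)
  (T : vcar V -> vcar V -> Fcar k E)
  (Hpsd : forall v, Fpos (T v v))
  (Hsym : forall u v, T u v = Fconj (T v u))
  (Hlin : forall (a b : Kty k) (v1 v2 w : vcar V),
     T (vadd V (vsmul V a v1) (vsmul V b v2)) w =
     Fadd (Fsmul a (T v1 w)) (Fsmul b (T v2 w)))
  (Hclin : forall (a b : Kty k) (w v1 v2 : vcar V),
     T w (vadd V (vsmul V a v1) (vsmul V b v2)) =
     Fadd (Fsmul (Kconj a) (T w v1)) (Fsmul (Kconj b) (T w v2))) :
  forall u v : vcar V,
    (exists m, Fis_inf (CS_set V T u v) m) /\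
    Fmod (T u v) = Fsub (Fgm (T u u) (T v v)) (Frsmul (/ 2) (Finf (CS_set V T u v))) /\
    Fle (Fmod (T u v)) (Fgm (T u u) (T v v)) /\
    (Fmod (T u v) = Fgm (T u u) (T v v) <-> Finf (CS_set V T u v) = Fzero).
Proof.
  intros u v.
  assert (Hmain : exists M, Fis_inf (CS_set V T u v) M /\
    Fmod (T u v) = Fsub (Fgm (T u u) (T v v)) (Frsmul (/2) M)).
  { destruct k. apply main_R; auto. apply main_C; auto. }
  destruct Hmain as [M [HM H2]].
  rewrite (Finf_eq _ _ _ _ HM).
  assert (H0 : Fle Fzero M).
  { destruct HM as [_ [_ H3]]. apply H3. apply Freal_zero. intros x Hx. eapply CS_lower; eauto. }
  destruct (final_part _ _ _ _ _ H0 H2) as [H3 H4].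
  split; [eauto|]. split; auto.
Qed.
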